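(* Let $X=X(\mathbb{Z}_n,S)$ be a circulant graph and let $x,y$ be distinct vertices of $X$. If perfect state transfer occurs on $X$ from $d^*e_x$ to $d^*e_y$, then $n$ is even and $y=x+\frac{n}{2}$.
   Context: For $S\subseteq\mathbb{Z}_n\setminus\{0\}$ with $S=-S$, the circulant graph $X(\mathbb{Z}_n,S)$ has vertex set $\mathbb{Z}_n$ and edge set $\{\{x,y\}\mid y-x\in S\}$. For a graph with symmetric arc set $\mathcal{A}$ ($t((x,y))=y$, $(x,y)^{-1}=(y,x)$): boundary matrix $d_{x,a}=\frac{1}{\sqrt{\deg x}}\delta_{x,t(a)}$, shift matrix $R_{a,b}=\delta_{a,b^{-1}}$, $U=R(2d^*d-I_{\mathcal{A}})$; $e_x$ is the standard unit vector. Perfect state transfer from $\Phi$ to a distinct state $\Psi$ means $U^\tau\Phi=\gamma\Psi$ for some $\tau\in\mathbb{Z}_{\ge1}$, $|\gamma|=1$. *)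

(* Defs.v *)
From HB Require Import structures.
From mathcomp Require Import all_boot all_order all_algebra all_field.
From mathcomp Require Import algC.
Set Implicit Arguments. Unset Strict Implicit. Unset Printing Implicit Defensive.
Import Order.TTheory GRing.Theory Num.Theory.
Local Open Scope ring_scope.

(* Circulant graph X(Z_n, S): vertex set 'Z_n, {x,y} edge iff y - x \in S.
   Symmetric arc set: arcs are ordered pairs (x,y) with y - x \in S. *)
Definition arc (n : nat) (S : {set 'Z_n}) := {a : 'Z_n * 'Z_n | a.2 - a.1 \in S}.

Definition term n (S : {set 'Z_n}) (a : arc S) : 'Z_n := (val a).2.

Definition circ_deg n (S : {set 'Z_n}) (x : 'Z_n) : nat :=
  #|[set y : 'Z_n | y - x \in S]|.

Definition bd n (S : {set 'Z_n}) (x : 'Z_n) (a : arc S) : algC :=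
  if term a == x then (sqrtC (circ_deg S x)%:R)^-1 else 0.

Definition dsd n (S : {set 'Z_n}) (a b : arc S) : algC :=
  \sum_(x : 'Z_n) (bd x a)^* * bd x b.

Definition shiftR n (S : {set 'Z_n}) (a b : arc S) : algC :=
  if val a == ((val b).2, (val b).1) then 1 else 0.

Definition Umat n (S : {set 'Z_n}) (a b : arc S) : algC :=
  \sum_(c : arc S) shiftR a c * (2 * dsd c b - (c == b)%:R).

Definition Uapply n (S : {set 'Z_n}) (Phi : arc S -> algC) : arc S -> algC :=
  fun a => \sum_(b : arc S) Umat a b * Phi b.

Definition Upow n (S : {set 'Z_n}) (tau : nat) (Phi : arc S -> algC) :=
  iter tau (@Uapply n S) Phi.

Definition dstar_e n (S : {set 'Z_n}) (x : 'Z_n) : arc S -> algC :=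
  fun a => (bd x a)^*.

Definition PST n (S : {set 'Z_n}) (Phi Psi : arc S -> algC) : Prop :=
  Phi <> Psi /\
  exists tau : nat, (0 < tau)%N /\
    exists gamma : algC, `|gamma| = 1 /\
      forall a, Upow tau Phi a = gamma * Psi a.

(* Main.v *)
Require Import Defs.
From HB Require Import structures.
From mathcomp Require Import all_boot all_order all_algebra all_field.
From mathcomp Require Import algC.
From mathcomp Require Import zify.
From Stdlib Require Import FunctionalExtensionality.
Import Order.TTheory GRing.Theory Num.Theory.
Local Open Scope ring_scope.

Section Aut.
Variables (n : nat) (S : {set 'Z_n}) (f : 'Z_n -> 'Z_n).
Hypothesis finj : injective f.
Hypothesis hf : forall a b : 'Z_n, (f b - f a \in S) = (b - a \in S).

Definition amap (a : Defs.arc S) : Defs.arc S :=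
  exist (fun p : 'Z_n * 'Z_n => p.2 - p.1 \in S) (f (sval a).1, f (sval a).2)
    (etrans (hf _ _) (proj2_sig a)).

Lemma amap_inj : injective amap.
Proof.
move=> [[a1 a2] ha] [[b1 b2] hb] /(congr1 sval) /= [] /finj e1 /finj e2.
by subst; congr exist; apply: bool_irrelevance.
Qed.

Lemma circ_degE x : circ_deg S x = #|S|.
Proof.
rewrite /circ_deg -(card_preimset S (addIr (- x))).
by apply: eq_card => z; rewrite !inE.
Qed.

Lemma bd_map x a : bd (f x) (amap a) = bd x a.
Proof. by rewrite /bd /term /= (inj_eq finj) !circ_degE. Qed.

Lemma dsd_map a b : dsd (amap a) (amap b) = dsd a b.
Proof.
rewrite /dsd (reindex_inj finj) /=.
by apply: eq_bigr => z _; rewrite !bd_map.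
Qed.

Lemma shiftR_map a b : shiftR (amap a) (amap b) = shiftR a b.
Proof.
rewrite /shiftR /=; case: a b => [[a1 a2] ha] [[b1 b2] hb] /=.
by rewrite !xpair_eqE !(inj_eq finj).
Qed.

Lemma Umat_map a b : Umat (amap a) (amap b) = Umat a b.
Proof.
rewrite /Umat (reindex_inj amap_inj) /=.
by apply: eq_bigr => c _; rewrite shiftR_map dsd_map (inj_eq amap_inj).
Qed.

Lemma Uapply_map (Phi : Defs.arc S -> algC) a :
  Uapply (fun b => Phi (amap b)) a = Uapply Phi (amap a).
Proof.
rewrite /Uapply [in RHS](reindex_inj amap_inj) /=.
by apply: eq_bigr => c _; rewrite Umat_map.
Qed.

Lemma Upow_ext tau (Phi Psi : Defs.arc S -> algC) :
  (forall a, Phi a = Psi a) -> forall a, Upow tau Phi a = Upow tau Psi a.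
Proof.
move=> e; elim: tau => [|t IH] a /=; first exact: e.
by rewrite /Uapply; apply: eq_bigr => b _; rewrite IH.
Qed.

Lemma Upow_map tau (Phi : Defs.arc S -> algC) a :
  Upow tau (fun b => Phi (amap b)) a = Upow tau Phi (amap a).
Proof.
elim: tau a => [|t IH] a //=.
rewrite -Uapply_map /Uapply; apply: eq_bigr => b _.
by rewrite -IH.
Qed.

Lemma dstar_map x a : dstar_e (f x) (amap a) = dstar_e x a.
Proof. by rewrite /dstar_e bd_map. Qed.

Lemma transfer tau gamma x y :
  let dx := @dstar_e n S in
  (forall a, Upow tau (dx x) a = gamma * dx y a) ->
  forall a, Upow tau (dx (f x)) a = gamma * dx (f y) a.
Proof.
move=> dx H a; rewrite /dx -(f_invF amap_inj a) -Upow_map dstar_map.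
rewrite -(H (invF amap_inj a)).
by apply: Upow_ext => b; rewrite dstar_map.
Qed.

End Aut.

Theorem lemma4p2 (n : nat) (Hn : (1 < n)%N) (S : {set 'Z_n})
    (HS0 : 0 \notin S) (HSsym : forall s, s \in S -> - s \in S)
    (x y : 'Z_n) (Hxy : x != y) :
  @PST n S (@dstar_e n S x) (@dstar_e n S y) ->
  ~~ odd n /\ y = x + (n %/ 2)%:R.
Proof.
move=> [Hne [tau [_ [gamma [Hg H]]]]].
case: (set_0Vmem S) => [S0 | [s Hs]].
  exfalso; apply: Hne; apply: functional_extensionality => -[a ha].
  by exfalso; move: (ha); rewrite S0 inE.
pose t := y - x.
have H1 := @transfer n S (fun z => z + t) (addIr t)
  (fun a b => ltac:(by rewrite opprD addrACA subrr addr0)) tau gamma x y H.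
have hg : forall a b : 'Z_n, ((x + y - b) - (x + y - a) \in S) = (b - a \in S).
  move=> a b; rewrite opprB addrC addrA addrNK.
  apply/idP/idP => /HSsym //; rewrite opprB //.
have ginj : injective (fun z : 'Z_n => x + y - z).
  by move=> a b /addrI /oppr_inj.
have H2 := @transfer n S (fun z => x + y - z) ginj hg tau gamma x y H.
simpl in H1, H2.
have ex : y + t = x.
  apply/eqP; apply: contraT => hneq.
  pose a0 := exist (fun p : 'Z_n * 'Z_n => p.2 - p.1 \in S) (x - s, x)
    (etrans (congr1 (fun z => z \in S) (subKr x s)) Hs).
  have xt : x + t = y by rewrite /t addrC subrK.
  have e1 : x + y - x = y by rewrite addrAC subrr add0r.
  have e2 : x + y - y = x by rewrite addrK.
  have := H1 a0; rewrite xt; rewrite e1 e2 in H2; rewrite H2.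
  have g0 : gamma != 0 by rewrite -normr_eq0 Hg oner_eq0.
  move/(mulfI g0); rewrite /dstar_e /bd /term /= eqxx.
  rewrite eq_sym (negbTE hneq) conjC0 => /eqP.
  rewrite conjC_eq0 invr_eq0 sqrtC_eq0 circ_degE pnatr_eq0.
  have : (0 < #|S|)%N by apply/card_gt0P; exists s.
  by case: #|S|.
have tt : t + t = 0.
  have h := subrr x; rewrite -{1}ex addrAC in h; exact: h.
have t0 : t != 0 by rewrite /t subr_eq0 eq_sym.
have yE : y = x + t by rewrite /t addrC subrK.
rewrite yE; clearbody t; clear -Hn tt t0.
case: n Hn x t tt t0 => [|[|m]] // _ x [d hd] tt t0.
have /(congr1 val) /= hdd := tt.
have d0 : (d != 0)%N by apply: contraNneq t0 => e; apply/eqP/val_inj.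
have hn : (d + d = m.+2)%N.
  have hd' : (d < m.+2)%N := hd.
  have h1 : ((d + d) %% m.+2 = 0)%N := hdd.
  case: (ltnP (d + d) m.+2) => hlt.
    by move: h1; rewrite modn_small // => /eqP; rewrite addn_eq0 (negbTE d0).
  move: h1; rewrite -(subnK hlt) modnDr modn_small; first lia.
  lia.
split.
  have : ~~ odd (m.+2) by rewrite -hn addnn odd_double.
  by [].
congr (_ + _); apply: val_inj => /=.
have -> : (m.+2 %/ 2 = d)%N by rewrite -hn addnn -muln2 mulnK.
exact: (esym (congr1 val (natr_Zp (Ordinal hd)))).
Qed.
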